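(* For any rooted tree-structure $\varphi$, the $R$-linear map $\rho:\mathcal{T}(\varphi)\to\mathcal{T}(\varphi)\otimes\mathcal{T}(\varphi)$ defined on generators by $$\rho(T,s)=\sum_{e\in\operatorname{edg}(T)}(T^1_e,s|_{T^1_e})\otimes(T^2_e,s|_{T^2_e})$$ is a pre-Lie comultiplication.
   Context: $R$ is a commutative ring with unit. A pre-Lie comultiplication on an $R$-module $A$ is an $R$-linear $\rho:A\to A\otimes A$ with $(\mathrm{id}-P^{1,2})\big((\rho\otimes\mathrm{id})\rho-(\mathrm{id}\otimes\rho)\rho\big)=0$, where $P^{1,2}(x\otimes y\otimes z)=y\otimes x\otimes z$. Trees are finite; a rooted tree has a distinguished vertex, the root. A subtree $T'$ of a rooted tree $T$ (a tree formed by some vertices and edges of $T$) is rooted at the unique vertex $v$ of $T'$ such that every path from the root of $T$ to a point of $T'$ passes through $v$. An embedding of rooted trees $j:T'\to T$ is a homeomorphism of $T'$ onto a subtree of $T$ respecting vertices, edges and roots. $RTrees$ is the category of rooted trees and embeddings. A rooted tree-structure is a contravariant functor $\varphi$ from $RTrees$ to sets. A rooted $\varphi$-tree is a pair $(T,s)$ with $s\in\varphi(T)$; $(T,s)$ and $(\tilde T,\tilde s)$ are homeomorphic if there is a homeomorphism $j:T\to\tilde T$ with $\varphi(j)(\tilde s)=s$. For a subtree $T'\subset T$, $s|_{T'}=\varphi(\iota)(s)$ with $\iota$ the inclusion. $\mathcal{T}(\varphi)$ is the free $R$-module on homeomorphism classes of rooted $\varphi$-trees. For an edge $e$ of $T$,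 removing the interior of $e$ leaves two subtrees $T^1_e,T^2_e$, with $T^2_e$ containing the root of $T$ (rooted there) and $T^1_e$ rooted at its vertex adjacent to $e$; $\operatorname{edg}(T)$ is the edge set. *)

(* Defs.v *)
From mathcomp Require Import all_boot all_algebra.
From mathcomp Require Import boolp.
Set Implicit Arguments. Unset Strict Implicit. Unset Printing Implicit Defensive.
Import GRing.Theory.
Local Open Scope ring_scope.

Definition rtree_ax (vs : seq nat) (r : nat) (p : nat -> nat) : Prop :=
  [/\ uniq vs, r \in vs, p r = r, {in vs, forall v, p v \in vs}
    & {in vs, forall v, exists k, iter k p v = r}].

Record rtree := RTree {
  rt_vs : seq nat;
  rt_root : nat;
  rt_par : nat -> nat;
  rt_ax : rtree_ax rt_vs rt_root rt_par }.

(* the edge {v, par v}, v <> root, is indexed by v *)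
Definition rt_edges (T : rtree) : seq nat :=
  [seq v <- rt_vs T | v != rt_root T].

Definition edge (T : rtree) := {e : nat | e \in rt_edges T}.

Definition edges (T : rtree) : seq (edge T) := pmap insub (rt_edges T).

(* embeddings of rooted trees (morphisms of RTrees), as vertex maps:          *)
(* injective on vertices, mapping edges to edges and respecting roots         *)
(* (equivalently: commuting with the parent maps away from the root).        *)
Definition is_emb (T' T : rtree) (f : nat -> nat) : Prop :=
  [/\ {in rt_vs T', forall v, f v \in rt_vs T},
      {in rt_vs T' &, injective f}
    & {in rt_vs T', forall v, v != rt_root T' -> f (rt_par T' v) = rt_par T (f v)}].

(* Morphisms are vertex maps (identified when equal on vertices).            *)
Record rtree_structure := RTreeStructure {
  ts_obj :> rtree -> Type;
  ts_map : forall (T' T : rtree) (f : nat -> nat), is_emb T' T f -> ts_obj T -> ts_obj T';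
  ts_map_id : forall (T : rtree) (f : nat -> nat) (pf : is_emb T T f),
      {in rt_vs T, forall v, f v = v} -> forall s, ts_map pf s = s;
  ts_map_comp : forall (T'' T' T : rtree) (f g h : nat -> nat)
      (pf : is_emb T' T f) (pg : is_emb T'' T' g) (ph : is_emb T'' T h),
      {in rt_vs T'', forall v, h v = f (g v)} ->
      forall s, ts_map ph s = ts_map pg (ts_map pf s) }.

Definition phitree (phi : rtree_structure) := {T : rtree & phi T}.

Definition homeo (phi : rtree_structure) (x y : phitree phi) : Prop :=
  exists (f : nat -> nat) (pf : is_emb (projT1 x) (projT1 y) f),
    {in rt_vs (projT1 y), forall w, exists2 v, v \in rt_vs (projT1 x) & f v = w}
    /\ ts_map pf (projT2 y) = projT2 x.

Definition desc (T : rtree) (e v : nat) : Prop := exists k, iter k (rt_par T) v = e.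

Section Cut.
Variables (T : rtree) (e : edge T).
Let ee := val e.

Lemma edgeP : ee \in rt_vs T /\ ee != rt_root T.
Proof. by have := valP e; rewrite mem_filter => /andP[-> ->]. Qed.

Definition vs1 := [seq v <- rt_vs T | `[< desc T ee v >]].
Definition par1 (v : nat) := if v == ee then ee else rt_par T v.
Definition vs2 := [seq v <- rt_vs T | ~~ `[< desc T ee v >]].

Lemma iter_root k : iter k (rt_par T) (rt_root T) = rt_root T.
Proof.
case: (rt_ax T) => _ _ pr _ _.
by elim: k => //= k ->; rewrite pr.
Qed.

Lemma sub1_ax : rtree_ax vs1 ee par1.
Proof.
case: (rt_ax T) => u rin pr cl re; case: edgeP => ein ner.
split.
- exact: filter_uniq.
- by rewrite mem_filter ein andbT; apply/asboolP; exists 0%N.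
- by rewrite /par1 eqxx.
- move=> v; rewrite mem_filter => /andP[/asboolP [k hk] vin].
  rewrite /par1; case: eqP => [_|/eqP nve].
    by rewrite mem_filter ein andbT; apply/asboolP; exists 0%N.
  rewrite mem_filter cl // andbT; apply/asboolP.
  case: k hk => [/= hv|k hk]; first by rewrite hv eqxx in nve.
  by exists k; rewrite -iterSr.
- move=> v; rewrite mem_filter => /andP[/asboolP [k hk] _].
  elim: k v hk => [|k IH] v hk; first by exists 0%N.
  rewrite iterSr in hk; case: (IH _ hk) => k' hk'.
  case: (eqVneq v ee) => [->|nve]; first by exists 0%N.
  by exists k'.+1; rewrite iterSr /par1 (negbTE nve).
Qed.

Definition sub1 : rtree := RTree sub1_ax.

Lemma sub2_ax : rtree_ax vs2 (rt_root T) (rt_par T).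
Proof.
case: (rt_ax T) => u rin pr cl re; case: edgeP => ein ner.
split.
- exact: filter_uniq.
- rewrite mem_filter rin andbT; apply/asboolP => -[k hk].
  by rewrite iter_root in hk; rewrite hk eqxx in ner.
- exact: pr.
- move=> v; rewrite mem_filter => /andP[nd vin].
  rewrite mem_filter cl // andbT; apply: contra nd => /asboolP [k hk].
  by apply/asboolP; exists k.+1; rewrite iterSr.
- by move=> v; rewrite mem_filter => /andP[_ /re].
Qed.

Definition sub2 : rtree := RTree sub2_ax.

Lemma incl1 : is_emb sub1 T id.
Proof.
split.
- by move=> v; rewrite /= mem_filter => /andP[].
- by move=> v w _ _.
- by move=> v _ /= nve; rewrite /par1 (negbTE nve).
Qed.

Lemma incl2 : is_emb sub2 T id.
Proof.
split.
- by move=> v; rewrite /= mem_filter => /andP[].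
- by move=> v w _ _.
- by [].
Qed.

End Cut.

Definition cut1 (phi : rtree_structure) (x : phitree phi) (e : edge (projT1 x))
  : phitree phi := existT _ (sub1 e) (ts_map (incl1 e) (projT2 x)).
Definition cut2 (phi : rtree_structure) (x : phitree phi) (e : edge (projT1 x))
  : phitree phi := existT _ (sub2 e) (ts_map (incl2 e) (projT2 x)).

(* Free R-modules on the classes of a relation [eqv] on a type Y.            *)
(* An element is represented by a formal finite combination                  *)
(* l = [:: (r_1, y_1); ...] (meaning sum_i r_i [y_i]); its coefficient on the *)
(* class of y is coef eqv l y.  Two combinations are equal in the module iff  *)
(* all their coefficients agree.  The tensor powers of the free module on the *)
(* classes of X are the free modules on classes of X*X and X*X*X, for the     *)
(* componentwise relation.                                                    *)
Definition coef (R : comPzRingType) (Y : Type) (eqv : Y -> Y -> Prop)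
    (l : seq (R * Y)) (y : Y) : R :=
  \sum_(p <- l | `[< eqv p.2 y >]) p.1.

Definition eqv2 (X : Type) (eqv : X -> X -> Prop) (a b : X * X) : Prop :=
  eqv a.1 b.1 /\ eqv a.2 b.2.
Definition eqv3 (X : Type) (eqv : X -> X -> Prop) (a b : X * X * X) : Prop :=
  [/\ eqv a.1.1 b.1.1, eqv a.1.2 b.1.2 & eqv a.2 b.2].

Section Comult.
Variables (R : comPzRingType) (X : Type) (eqv : X -> X -> Prop).
Variable g : X -> seq (R * (X * X)).

Definition lin_ext (l : seq (R * X)) : seq (R * (X * X)) :=
  flatten [seq [seq (p.1 * q.1, q.2) | q <- g p.2] | p <- l].
Definition ext_l (l : seq (R * (X * X))) : seq (R * (X * X * X)) :=
  flatten [seq [seq (p.1 * q.1, (q.2.1, q.2.2, p.2.2)) | q <- g p.2.1] | p <- l].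
Definition ext_r (l : seq (R * (X * X))) : seq (R * (X * X * X)) :=
  flatten [seq [seq (p.1 * q.1, (p.2.1, q.2.1, q.2.2)) | q <- g p.2.2] | p <- l].
Definition fsub (Z : Type) (a b : seq (R * Z)) : seq (R * Z) :=
  a ++ [seq (- p.1, p.2) | p <- b].
Definition flip12 (l : seq (R * (X * X * X))) : seq (R * (X * X * X)) :=
  [seq (p.1, (p.2.1.2, p.2.1.1, p.2.2)) | p <- l].

Definition preLie_defect (l : seq (R * X)) : seq (R * (X * X * X)) :=
  let t := fsub (ext_l (lin_ext l)) (ext_r (lin_ext l)) in fsub t (flip12 t).

Definition well_defined_comult : Prop :=
  forall l l' : seq (R * X), (forall x, coef eqv l x = coef eqv l' x) ->
    forall y, coef (eqv2 eqv) (lin_ext l) y = coef (eqv2 eqv) (lin_ext l') y.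

Definition preLie_comult : Prop :=
  forall (l : seq (R * X)) (y : X * X * X),
    coef (eqv3 eqv) (preLie_defect l) y = 0.
End Comult.

Definition rho_gen (R : comPzRingType) (phi : rtree_structure) (x : phitree phi)
  : seq (R * (phitree phi * phitree phi)) :=
  [seq (1, (cut1 e, cut2 e)) | e <- edges (projT1 x)].

(* Main.v *)
Require Import Defs.
From mathcomp Require Import all_boot all_algebra.
From mathcomp Require Import boolp.
Set Implicit Arguments. Unset Strict Implicit. Unset Printing Implicit Defensive.

Section TreeFacts.
Variable T : rtree.
Local Notation vs := (rt_vs T).
Local Notation r := (rt_root T).
Local Notation p := (rt_par T).
Local Notation D := (desc T).

Lemma par_mem v : v \in vs -> p v \in vs.
Proof. by case: (rt_ax T) => _ _ _ cl _; apply: cl. Qed.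
Lemma root_mem : r \in vs.
Proof. by case: (rt_ax T). Qed.
Lemma par_root : p r = r.
Proof. by case: (rt_ax T). Qed.
Lemma iter_mem k v : v \in vs -> iter k p v \in vs.
Proof. by move=> vin; elim: k => //= k IH; apply: par_mem. Qed.
Lemma reach v : v \in vs -> exists k, iter k p v = r.
Proof. by case: (rt_ax T) => _ _ _ _ re; apply: re. Qed.

Lemma cycle_root n v : v \in vs -> 0 < n -> iter n p v = v -> v = r.
Proof.
move=> vin n0 hv; have [K hK] := reach vin.
have hm : forall m, iter (m * n) p v = v.
  by elim => [|m IH] //=; rewrite mulSn iterD IH hv.
have := hm K.
have -> : K * n = (K * n - K) + K by rewrite subnK // leq_pmulr.
by rewrite iterD hK iter_root => <-.
Qed.

Lemma desc_antisym a b : a \in vs -> b \in vs -> D a b -> D b a -> a = b.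
Proof.
move=> ain bin [k hk] [m hm].
have [/eqP|pos] := posnP (m + k).
  by rewrite addn_eq0 => /andP[_ /eqP k0]; rewrite -hk k0.
have hb : b = r by apply: (cycle_root bin pos); rewrite iterD hk hm.
by rewrite -hk hb iter_root.
Qed.

Lemma desc_trans a b c : D a b -> D b c -> D a c.
Proof. by move=> [k hk] [m hm]; exists (k + m); rewrite iterD hm hk. Qed.

Lemma desc_cmp a b v : D a v -> D b v -> D a b \/ D b a.
Proof.
move=> [k hk] [m hm]; case: (leqP k m) => km.
  right; exists (m - k); by rewrite -hk -iterD subnK.
left; exists (k - m); by rewrite -hm -iterD subnK // ltnW.
Qed.

Lemma desc_refl v : D v v.
Proof. by exists 0. Qed.

Lemma desc_root v : D v r -> v = r.
Proof. by move=> [k hk]; rewrite -hk iter_root. Qed.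

Lemma desc_r v : v \in vs -> D r v.
Proof. exact: reach. Qed.
End TreeFacts.

Section Emb.
Variables (X Y : rtree) (f : nat -> nat) (pf : is_emb X Y f).

Lemma emb_nonroot v : v \in rt_vs X -> v != rt_root X -> f v != rt_root Y.
Proof.
case: pf => m inj pp vin nv; apply/eqP => fv.
have h : f (rt_par X v) = f v by rewrite pp // fv par_root.
have := inj _ _ (par_mem vin) vin h => e.
have := @cycle_root X 1 v vin isT e; by move/eqP: nv.
Qed.

Hypothesis surj : {in rt_vs Y, forall w, exists2 v, v \in rt_vs X & f v = w}.

Lemma emb_root : f (rt_root X) = rt_root Y.
Proof.
have [u uin fu] := surj (root_mem Y).
case: (eqVneq u (rt_root X)) => [<-//|nu].
by move: (emb_nonroot uin nu); rewrite fu eqxx.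
Qed.

Lemma emb_par v : v \in rt_vs X -> f (rt_par X v) = rt_par Y (f v).
Proof.
move=> vin; case: (eqVneq v (rt_root X)) => [->|nv].
  by rewrite par_root emb_root par_root.
by case: pf => _ _ pp; apply: pp.
Qed.

Lemma emb_iter k v : v \in rt_vs X -> f (iter k (rt_par X) v) = iter k (rt_par Y) (f v).
Proof. by move=> vin; elim: k => //= k <-; rewrite emb_par // iter_mem. Qed.

Lemma emb_desc a v : a \in rt_vs X -> v \in rt_vs X ->
  desc X a v <-> desc Y (f a) (f v).
Proof.
move=> ain vin; split=> -[k hk]; exists k.
  by rewrite -emb_iter // hk.
case: pf => _ inj _; apply: inj => //; first exact: iter_mem.
by rewrite emb_iter.
Qed.
End Emb.

Lemma id_emb (T : rtree) : is_emb T T id.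
Proof. by split. Qed.

Lemma emb_comp (A B C : rtree) g f : is_emb A B g -> is_emb B C f -> is_emb A C (f \o g).
Proof.
move=> pg pf; have pg' := pg; have pf' := pf.
case: pg => mg ig pag; case: pf => mf if_ paf; split.
- by move=> v vin /=; apply: mf; apply: mg.
- move=> u v uin vin /= e; apply: ig => //; apply: if_ => //; exact: mg.
- move=> v vin nv /=; rewrite pag // paf //; first exact: mg.
  exact: (emb_nonroot pg').
Qed.

Section Struct.
Variable phi : rtree_structure.

Lemma ts_map_ext (T' T : rtree) f g (pf : is_emb T' T f) (pg : is_emb T' T g) :
  {in rt_vs T', f =1 g} -> forall s : phi T, ts_map pf s = ts_map pg s.
Proof.
move=> fg s; rewrite (ts_map_comp pg (id_emb T') pf) ?ts_map_id //.
Qed.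

Lemma homeo_refl (x : phitree phi) : homeo x x.
Proof.
exists id, (id_emb _); split; first by move=> w win; exists w.
by rewrite ts_map_id.
Qed.

Lemma homeo_trans (x y z : phitree phi) : homeo x y -> homeo y z -> homeo x z.
Proof.
move=> [f [pf [sf hf]]] [g [pg [sg hg]]].
exists (g \o f), (emb_comp pf pg); split.
  move=> w /sg [v' v'in <-]; have [v vin <-] := sf _ v'in; by exists v.
by rewrite (ts_map_comp pg pf) // hg hf.
Qed.

Lemma homeo_sym (x y : phitree phi) : homeo x y -> homeo y x.
Proof.
move=> [f [pf [sf hf]]].
set X := projT1 x in pf sf hf *; set Y := projT1 y in pf sf hf *.
pose g := fun w => nth 0 (rt_vs X) (index w (map f (rt_vs X))).
have gin w : w \in rt_vs Y -> (g w \in rt_vs X) /\ f (g w) = w.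
  move=> win; have [v vin fv] := sf w win.
  have wm : w \in map f (rt_vs X) by rewrite -fv map_f.
  have ilt : index w (map f (rt_vs X)) < size (rt_vs X).
    by rewrite -(size_map f) index_mem.
  split; first by rewrite /g mem_nth.
  by rewrite /g -(nth_map 0 0) // nth_index.
have froot := emb_root pf sf.
have pf' := pf; case: pf' => mf inj pp.
have pg : is_emb Y X g.
  split.
  - by move=> w /gin[].
  - by move=> w1 w2 /gin[_ h1] /gin[_ h2] e; rewrite -h1 -h2 e.
  - move=> w win nw; have [gi fg] := gin w win.
    have [gpi fgp] := gin _ (par_mem win).
    apply: inj => //; first exact: par_mem.
    have ngr : g w != rt_root X.
      by apply: contra nw => /eqP e; rewrite -fg e froot.
    by rewrite fgp pp // fg.
exists g, pg; split.
- move=> v vin; exists (f v); first exact: mf.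
  have [gi fg] := gin (f v) (mf v vin).
  exact: (inj _ _ gi vin fg).
- rewrite -hf -(ts_map_comp pf pg (id_emb Y)) ?ts_map_id //.
  by move=> w /gin[_ ->].
Qed.
End Struct.

Section Rest.
Variable phi : rtree_structure.
Implicit Types x y z : phitree phi.

Definition rest x z := exists pf : is_emb (projT1 z) (projT1 x) id,
  projT2 z = ts_map pf (projT2 x).

Lemma rest_refl x : rest x x.
Proof. by exists (id_emb _); rewrite ts_map_id. Qed.

Lemma rest_trans x y z : rest x y -> rest y z -> rest x z.
Proof.
move=> [p1 h1] [p2 h2]; exists (emb_comp p2 p1).
by rewrite h2 h1 (ts_map_comp p1 p2).
Qed.

Lemma homeo_rest x x' z z' f (pf : is_emb (projT1 x) (projT1 x') f) :
  ts_map pf (projT2 x') = projT2 x -> rest x z -> rest x' z' ->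
  forall pz : is_emb (projT1 z) (projT1 z') f,
  {in rt_vs (projT1 z'), forall w, exists2 v, v \in rt_vs (projT1 z) & f v = w} ->
  homeo z z'.
Proof.
move=> hf [p1 h1] [p2 h2] pz sz; exists f, pz; split => //.
rewrite h2 h1 -hf -(ts_map_comp p2 pz (emb_comp pz p2)) //.
rewrite -(ts_map_comp pf p1 (emb_comp p1 pf)) //.
exact: ts_map_ext.
Qed.

Lemma homeo_same x z z' : rest x z -> rest x z' ->
  (forall t, (t \in rt_vs (projT1 z)) = (t \in rt_vs (projT1 z'))) ->
  rt_root (projT1 z) = rt_root (projT1 z') ->
  {in rt_vs (projT1 z), forall t, t != rt_root (projT1 z) ->
     rt_par (projT1 z) t = rt_par (projT1 z') t} ->
  homeo z z'.
Proof.
move=> rz rz' hv hr hp.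
have pz : is_emb (projT1 z) (projT1 z') id.
  split.
  - by move=> t; rewrite hv.
  - by move=> ? ?.
  - by move=> t tin nt; rewrite /= hp.
apply: (@homeo_rest x x z z' id (id_emb _) _ rz rz' pz).
  by rewrite ts_map_id.
by move=> w win; exists w; rewrite ?hv.
Qed.

Definition c1 x (v : nat) : phitree phi :=
  match (insub v : option (edge (projT1 x))) with
  | Some e => @cut1 phi x e | None => x end.
Definition c2 x (v : nat) : phitree phi :=
  match (insub v : option (edge (projT1 x))) with
  | Some e => @cut2 phi x e | None => x end.

Lemma rest_c1 x v : rest x (c1 x v).
Proof. rewrite /c1; case: insubP => [e _ _|_]; last exact: rest_refl.
by exists (incl1 e). Qed.
Lemma rest_c2 x v : rest x (c2 x v).
Proof. rewrite /c2; case: insubP => [e _ _|_]; last exact: rest_refl.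
by exists (incl2 e). Qed.

Section CE.
Variables (x : phitree phi) (v : nat).
Hypothesis ve : v \in rt_edges (projT1 x).
Local Notation T := (projT1 x).

Lemma c1_vs : rt_vs (projT1 (c1 x v)) = [seq w <- rt_vs T | `[< desc T v w >]].
Proof. by rewrite /c1 (insubT (fun w => w \in rt_edges T) ve). Qed.
Lemma c1_root : rt_root (projT1 (c1 x v)) = v.
Proof. by rewrite /c1 (insubT (fun w => w \in rt_edges T) ve). Qed.
Lemma c1_par : rt_par (projT1 (c1 x v)) = fun w => if w == v then v else rt_par T w.
Proof. by rewrite /c1 (insubT (fun w => w \in rt_edges T) ve). Qed.
Lemma c2_vs : rt_vs (projT1 (c2 x v)) = [seq w <- rt_vs T | ~~ `[< desc T v w >]].
Proof. by rewrite /c2 (insubT (fun w => w \in rt_edges T) ve). Qed.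
Lemma c2_root : rt_root (projT1 (c2 x v)) = rt_root T.
Proof. by rewrite /c2 (insubT (fun w => w \in rt_edges T) ve). Qed.
Lemma c2_par : rt_par (projT1 (c2 x v)) = rt_par T.
Proof. by rewrite /c2 (insubT (fun w => w \in rt_edges T) ve). Qed.
Lemma c2_desc a t : desc (projT1 (c2 x v)) a t = desc T a t.
Proof. by rewrite /desc c2_par. Qed.

Lemma c1_desc a t : v \in rt_vs T -> a \in rt_vs T -> desc T v a -> a != v ->
  desc (projT1 (c1 x v)) a t <-> desc T a t.
Proof.
move=> vin ain dva av; rewrite /desc c1_par.
set q := fun w => if w == v then v else rt_par T w.
have qE w : w != v -> q w = rt_par T w by rewrite /q => /negbTE ->.
have qv : q v = v by rewrite /q eqxx.
split=> -[k hk]; exists k.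
  have h : forall k t, iter k q t != v -> iter k q t = iter k (rt_par T) t.
    elim=> // n IH t0 /=; case: (eqVneq (iter n q t0) v) => [->|ne].
      by rewrite qv eqxx.
    by rewrite qE // IH.
  by rewrite -h hk.
have h : forall k, (forall j, j <= k -> iter j (rt_par T) t != v) ->
    iter k q t = iter k (rt_par T) t.
  elim=> // n IH hj /=; rewrite IH; last by move=> j jn; apply: hj; rewrite (leq_trans jn).
  by rewrite qE // hj.
rewrite h // => j jk; apply/eqP => hv.
have dav : desc T a v by exists (k - j); rewrite -hv -iterD subnK.
by move: av; rewrite (desc_antisym ain vin dav dva) eqxx.
Qed.
End CE.
End Rest.
Import GRing.Theory.
Local Open Scope ring_scope.

Section Sums.
Variable R : comPzRingType.
Definition ind_ (P : Prop) : R := if `[<P>] then 1 else 0.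

Lemma coef_sumE (Y : Type) (E : Y -> Y -> Prop) (l : seq (R * Y)) y :
  coef E l y = \sum_(p <- l) p.1 * ind_ (E p.2 y).
Proof.
rewrite /coef big_mkcond; apply: eq_bigr => p _; rewrite /ind_.
by case: ifP => _; rewrite ?mulr1 ?mulr0.
Qed.

Lemma flatten_sum (Z W W' : Type) (L : seq (R * Z)) (G : Z -> seq (R * W))
  (h : Z -> W -> W') (F : W' -> R) :
  \sum_(r <- flatten [seq [seq (p.1 * q.1, h p.2 q.2) | q <- G p.2] | p <- L]) r.1 * F r.2 =
  \sum_(p <- L) p.1 * \sum_(q <- G p.2) q.1 * F (h p.2 q.2).
Proof.
rewrite big_flatten big_map; apply: eq_bigr => p _.
by rewrite big_map mulr_sumr; apply: eq_bigr => q _ /=; rewrite mulrA.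
Qed.

Lemma lin_sum (X : Type) (g : X -> seq (R * (X * X))) (l : seq (R * X)) (F : X * X -> R) :
  \sum_(r <- lin_ext g l) r.1 * F r.2 = \sum_(p <- l) p.1 * \sum_(q <- g p.2) q.1 * F q.2.
Proof. exact: (flatten_sum l g (fun _ w => w) F). Qed.

Lemma extl_sum (X : Type) (g : X -> seq (R * (X * X))) (L : seq (R * (X * X))) (F : X * X * X -> R) :
  \sum_(r <- ext_l g L) r.1 * F r.2 =
  \sum_(p <- L) p.1 * \sum_(q <- g p.2.1) q.1 * F (q.2.1, q.2.2, p.2.2).
Proof. exact: (flatten_sum L (fun z => g z.1) (fun z w => (w.1, w.2, z.2)) F). Qed.

Lemma extr_sum (X : Type) (g : X -> seq (R * (X * X))) (L : seq (R * (X * X))) (F : X * X * X -> R) :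
  \sum_(r <- ext_r g L) r.1 * F r.2 =
  \sum_(p <- L) p.1 * \sum_(q <- g p.2.2) q.1 * F (p.2.1, q.2.1, q.2.2).
Proof. exact: (flatten_sum L (fun z => g z.2) (fun z w => (z.1, w.1, w.2)) F). Qed.

Lemma coef_fsub (Y : Type) (E : Y -> Y -> Prop) (a b : seq (R * Y)) y :
  coef E (fsub a b) y = coef E a y - coef E b y.
Proof.
rewrite !coef_sumE /fsub big_cat big_map /=; congr (_ + _).
by rewrite -sumrN; apply: eq_bigr => p _; rewrite mulNr.
Qed.

Lemma coef_flip (X : Type) (E : X -> X -> Prop) (l : seq (R * (X * X * X))) y :
  coef (eqv3 E) (flip12 l) y = coef (eqv3 E) l (y.1.2, y.1.1, y.2).
Proof.
rewrite /coef /flip12 big_map; apply: eq_bigl => p /=.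
by apply: asbool_equiv_eq; split => -[h1 h2 h3]; split.
Qed.

Lemma sum_class (Y : Type) (E : Y -> Y -> Prop)
  (Erefl : forall a, E a a) (Esym : forall a b, E a b -> E b a)
  (Etrans : forall a b c, E a b -> E b c -> E a c)
  (G : Y -> R) (GE : forall a b, E a b -> G a = G b) :
  forall l l' : seq (R * Y), (forall y, coef E l y = coef E l' y) ->
  \sum_(p <- l) p.1 * G p.2 = \sum_(p <- l') p.1 * G p.2.
Proof.
have step : forall (l : seq (R * Y)) y0, \sum_(p <- l) p.1 * G p.2 =
    coef E l y0 * G y0 + \sum_(p <- [seq p <- l | ~~ `[< E p.2 y0 >]]) p.1 * G p.2.
  move=> l y0; rewrite (bigID (fun p => `[< E p.2 y0 >])) /= big_filter /coef mulr_suml.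
  by congr (_ + _); apply: eq_bigr => p /asboolP h; rewrite (GE _ _ h).
have cf : forall (l : seq (R * Y)) y0 y,
    coef E [seq p <- l | ~~ `[< E p.2 y0 >]] y = if `[< E y y0 >] then 0 else coef E l y.
  move=> l y0 y; rewrite /coef big_filter_cond; case: ifP => /asboolP hy.
    apply: big1 => p /andP[/asboolP h1 /asboolP h2]; exfalso; apply: h1.
    exact: Etrans h2 hy.
  apply: eq_bigl => p; apply/andP/idP => [[]//|h]; split => //.
  apply/asboolP => h1; apply: hy; apply: Etrans h1; apply: Esym.
  exact: (elimT (asboolP _) h).
move=> l l'; have [n hn] : exists n, (size l + size l' <= n)%N.
  by exists (size l + size l')%N.
elim: n l l' hn => [|n IH] l l'.
  rewrite leqn0 addn_eq0 => /andP[/eqP/size0nil -> /eqP/size0nil ->] _.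
  by rewrite !big_nil.
move=> hs hc; case el: (l ++ l') => [|p0 rest].
  by move: (congr1 size el); rewrite size_cat => /eqP; rewrite addn_eq0 =>
    /andP[/eqP/size0nil -> /eqP/size0nil ->]; rewrite !big_nil.
rewrite (step l p0.2) (step l' p0.2) hc; congr (_ + _); apply: IH.
  set a := (fun p : R * Y => ~~ `[< E p.2 p0.2 >]).
  have lt : (count a (l ++ l') < size (l ++ l'))%N.
    rewrite el /= /a.
    have -> : `[< E p0.2 p0.2 >] = true by apply/asboolP.
    by rewrite add0n ltnS count_size.
  by rewrite !size_filter -count_cat -ltnS (leq_trans lt) // size_cat.
by move=> y; rewrite !cf hc.
Qed.
End Sums.

Section H.
Variables (phi : rtree_structure) (x : phitree phi).
Local Notation T := (projT1 x).
Local Notation vs := (rt_vs T).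
Local Notation r := (rt_root T).
Local Notation D := (desc T).

Lemma inE_x v : (v \in rt_edges T) = (v != r) && (v \in vs).
Proof. by rewrite mem_filter. Qed.

Section UV.
Variables u v : nat.
Hypotheses (uin : u \in vs) (vin : v \in vs) (ur : u != r) (duv : D u v) (vu : v != u).

Let ue : u \in rt_edges T. Proof. by rewrite inE_x ur uin. Qed.
Let ve : v \in rt_edges T.
Proof.
rewrite inE_x vin andbT; apply/eqP => vr; have := duv; rewrite vr => /desc_root ur'.
by move: ur; rewrite ur' eqxx.
Qed.
Let ndvu : ~ D v u.
Proof. by move=> dvu; move: vu; rewrite (desc_antisym vin uin dvu duv) eqxx. Qed.
Let ve' : v \in rt_edges (projT1 (c1 x u)).
Proof. by rewrite mem_filter c1_vs // c1_root // mem_filter vu vin andbT; apply/asboolP. Qed.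
Let ue2 : u \in rt_edges (projT1 (c2 x v)).
Proof. by rewrite mem_filter c2_vs // c2_root // mem_filter ur uin andbT; apply/asboolP. Qed.

Lemma H1 : homeo (c1 (c1 x u) v) (c1 x v).
Proof.
apply: (homeo_same (rest_trans (rest_c1 x u) (rest_c1 (c1 x u) v)) (rest_c1 x v)).
- move=> t; rewrite (c1_vs ve') (c1_vs ue) (c1_vs ve) !mem_filter.
  case tin: (t \in vs); last by rewrite !andbF.
  rewrite !andbT; apply/andP/asboolP => [[/asboolP h1 /asboolP h2]|h].
    exact: (c1_desc ue t uin vin duv vu).1 h1.
  split; apply/asboolP; last exact: desc_trans duv h.
  exact: (c1_desc ue t uin vin duv vu).2 h.
- by rewrite (c1_root ve') (c1_root ve).
- move=> t; rewrite (c1_vs ve') (c1_vs ue) !mem_filter (c1_root ve').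
  move=> /and3P[/asboolP h1 /asboolP h2 tin] tv.
  rewrite (c1_par ve') (c1_par ue) (c1_par ve) /= (negbTE tv).
  have tu : t != u.
    apply/eqP => tu; move: h1; rewrite tu => h1.
    by apply: ndvu; apply: (c1_desc ue u uin vin duv vu).1.
  by rewrite (negbTE tu).
Qed.

Lemma H2 : homeo (c2 (c1 x u) v) (c1 (c2 x v) u).
Proof.
apply: (homeo_same (rest_trans (rest_c1 x u) (rest_c2 (c1 x u) v))
                   (rest_trans (rest_c2 x v) (rest_c1 (c2 x v) u))).
- move=> t; rewrite (c2_vs ve') (c1_vs ue) (c1_vs ue2) (c2_vs ve) !mem_filter c2_desc //.
  case tin: (t \in vs); last by rewrite !andbF.
  case dut: `[< D u t >]; rewrite ?andbF //= !andbT; congr (~~ _).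
  apply: asbool_equiv_eq; apply: (c1_desc ue t uin vin duv vu).
- by rewrite (c2_root ve') (c1_root ue) (c1_root ue2).
- by move=> t _ _; rewrite (c2_par ve') (c1_par ue) (c1_par ue2) (c2_par ve).
Qed.

Lemma H3 : homeo (c2 x u) (c2 (c2 x v) u).
Proof.
apply: (homeo_same (rest_c2 x u) (rest_trans (rest_c2 x v) (rest_c2 (c2 x v) u))).
- move=> t; rewrite (c2_vs ue) (c2_vs ue2) (c2_vs ve) !mem_filter c2_desc //.
  case tin: (t \in vs); last by rewrite !andbF.
  case dut: `[< D u t >] => //=; rewrite !andbT.
  apply/esym/negP => /asboolP dvt; move/negP: dut; apply; apply/asboolP.
  exact: desc_trans duv dvt.
- by rewrite (c2_root ue) (c2_root ue2) (c2_root ve).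
- by move=> t _ _; rewrite (c2_par ue) (c2_par ue2) (c2_par ve).
Qed.
End UV.

Section AB.
Variables a b : nat.
Hypotheses (ain : a \in vs) (bin : b \in vs) (ar : a != r) (br : b != r)
  (nab : ~ D a b) (nba : ~ D b a).

Let ae : a \in rt_edges T. Proof. by rewrite inE_x ar ain. Qed.
Let be : b \in rt_edges T. Proof. by rewrite inE_x br bin. Qed.
Let ae2 : a \in rt_edges (projT1 (c2 x b)).
Proof. by rewrite mem_filter c2_vs // c2_root // mem_filter ar ain andbT; apply/asboolP. Qed.
Let be2 : b \in rt_edges (projT1 (c2 x a)).
Proof. by rewrite mem_filter c2_vs // c2_root // mem_filter br bin andbT; apply/asboolP. Qed.

Lemma H4 : homeo (c1 x a) (c1 (c2 x b) a).
Proof.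
apply: (homeo_same (rest_c1 x a) (rest_trans (rest_c2 x b) (rest_c1 (c2 x b) a))).
- move=> t; rewrite (c1_vs ae) (c1_vs ae2) (c2_vs be) !mem_filter c2_desc //.
  case tin: (t \in vs); last by rewrite !andbF.
  case dat: `[< D a t >] => //=; rewrite !andbT.
  apply/esym/negP => /asboolP dbt; move/asboolP: dat => dat.
  by case: (desc_cmp dat dbt).
- by rewrite (c1_root ae) (c1_root ae2).
- by move=> t _ _; rewrite (c1_par ae) (c1_par ae2) (c2_par be).
Qed.

Lemma H5 : homeo (c2 (c2 x a) b) (c2 (c2 x b) a).
Proof.
apply: (homeo_same (rest_trans (rest_c2 x a) (rest_c2 (c2 x a) b))
                   (rest_trans (rest_c2 x b) (rest_c2 (c2 x b) a))).
- move=> t; rewrite (c2_vs ae2) (c2_vs be2) (c2_vs ae) (c2_vs be) !mem_filter !c2_desc //.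
  by case: (t \in vs); case: `[< D a t >]; case: `[< D b t >].
- by rewrite (c2_root ae2) (c2_root be2) (c2_root ae) (c2_root be).
- by move=> t _ _; rewrite (c2_par ae2) (c2_par be2) (c2_par ae) (c2_par be).
Qed.
End AB.
End H.

Section Main.
Variables (R : comPzRingType) (phi : rtree_structure).
Local Notation g := (@rho_gen R phi).
Local Notation PT := (phitree phi).

Lemma sum_edges_gen (x : PT) (F : PT -> PT -> R) s :
  \sum_(e <- pmap insub s) F (@cut1 phi x e) (@cut2 phi x e) =
  \sum_(v <- s | v \in rt_edges (projT1 x)) F (c1 x v) (c2 x v).
Proof.
elim: s => [|v s IH]; first by rewrite !big_nil.
rewrite big_cons /=; case: (boolP (v \in rt_edges (projT1 x))) => h.
  by rewrite /c1 /c2 (insubT (fun w => w \in rt_edges (projT1 x)) h) /= big_cons IH.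
by rewrite (@insubF _ (fun w => w \in rt_edges (projT1 x)) (edge (projT1 x)) _ (negbTE h)) /= IH.
Qed.

Lemma rho_sum (x : PT) (K : PT * PT -> R) :
  \sum_(q <- g x) q.1 * K q.2 = \sum_(v <- rt_edges (projT1 x)) K (c1 x v, c2 x v).
Proof.
rewrite /rho_gen big_map.
rewrite (eq_bigr (fun e => K (@cut1 phi x e, @cut2 phi x e))); last by move=> e _; rewrite mul1r.
rewrite /edges (sum_edges_gen x (fun a b => K (a, b))) [RHS]big_seq_cond.
by apply: eq_bigl => v; rewrite andbT.
Qed.

Lemma ind2_homeo (a b a' b' : PT) y : homeo a a' -> homeo b b' ->
  ind_ R (eqv2 (@homeo phi) (a, b) y) = ind_ R (eqv2 (@homeo phi) (a', b') y).
Proof.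
move=> ha hb; rewrite /ind_ (@asbool_equiv_eq _ (eqv2 (@homeo phi) (a', b') y)) //.
rewrite /eqv2 /=; split=> -[h1 h2]; split.
- exact: homeo_trans (homeo_sym ha) h1.
- exact: homeo_trans (homeo_sym hb) h2.
- exact: homeo_trans ha h1.
- exact: homeo_trans hb h2.
Qed.

Lemma ind3_homeo (a b c a' b' c' : PT) y : homeo a a' -> homeo b b' -> homeo c c' ->
  ind_ R (eqv3 (@homeo phi) (a, b, c) y) = ind_ R (eqv3 (@homeo phi) (a', b', c') y).
Proof.
move=> ha hb hc; rewrite /ind_ (@asbool_equiv_eq _ (eqv3 (@homeo phi) (a', b', c') y)) //.
rewrite /eqv3 /=; split=> -[h1 h2 h3]; split.
- exact: homeo_trans (homeo_sym ha) h1.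
- exact: homeo_trans (homeo_sym hb) h2.
- exact: homeo_trans (homeo_sym hc) h3.
- exact: homeo_trans ha h1.
- exact: homeo_trans hb h2.
- exact: homeo_trans hc h3.
Qed.

Lemma cut_homeo (x x' : PT) f (pf : is_emb (projT1 x) (projT1 x') f)
  (sf : {in rt_vs (projT1 x'), forall w, exists2 v, v \in rt_vs (projT1 x) & f v = w})
  (hf : ts_map pf (projT2 x') = projT2 x) v :
  v \in rt_edges (projT1 x) ->
  f v \in rt_edges (projT1 x') /\ homeo (c1 x v) (c1 x' (f v)) /\ homeo (c2 x v) (c2 x' (f v)).
Proof.
move=> ve; have := ve; rewrite inE_x => /andP[vr vin].
have pf' := pf; case: pf' => mf inj pp.
have fve : f v \in rt_edges (projT1 x') by rewrite inE_x (emb_nonroot pf) // mf.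
have fneq t : t \in rt_vs (projT1 x) -> (f t == f v) = (t == v).
  by move=> tin; apply/eqP/eqP => [|->] //; apply: inj.
split => //; split.
- apply: (homeo_rest hf (rest_c1 x v) (rest_c1 x' (f v))).
  + split.
    * move=> t; rewrite (c1_vs ve) (c1_vs fve) !mem_filter => /andP[/asboolP d tin].
      rewrite mf // andbT; apply/asboolP; exact/(emb_desc pf sf vin tin).
    * by move=> a b; rewrite (c1_vs ve) !mem_filter => /andP[_ ain] /andP[_ bin]; apply: inj.
    * move=> t; rewrite (c1_vs ve) mem_filter (c1_root ve) (c1_par ve) (c1_par fve).
      by move=> /andP[_ tin] ntv /=; rewrite fneq // (negbTE ntv) (emb_par pf sf).
  + move=> w; rewrite (c1_vs fve) mem_filter => /andP[/asboolP d win].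
    have [t tin ftw] := sf w win; exists t => //.
    rewrite (c1_vs ve) mem_filter tin andbT; apply/asboolP.
    by apply/(emb_desc pf sf vin tin); rewrite ftw.
- apply: (homeo_rest hf (rest_c2 x v) (rest_c2 x' (f v))).
  + split.
    * move=> t; rewrite (c2_vs ve) (c2_vs fve) !mem_filter => /andP[d tin].
      rewrite mf // andbT; apply: contra d => /asboolP d; apply/asboolP.
      exact/(emb_desc pf sf vin tin).
    * by move=> a b; rewrite (c2_vs ve) !mem_filter => /andP[_ ain] /andP[_ bin]; apply: inj.
    * move=> t; rewrite (c2_vs ve) mem_filter (c2_par ve) (c2_par fve).
      by move=> /andP[_ tin] _; rewrite (emb_par pf sf).
  + move=> w; rewrite (c2_vs fve) mem_filter => /andP[d win].
    have [t tin ftw] := sf w win; exists t => //.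
    rewrite (c2_vs ve) mem_filter tin andbT; apply: contra d => /asboolP d; apply/asboolP.
    by rewrite -ftw; apply/(emb_desc pf sf vin tin).
Qed.

Lemma Ginv y (x x' : PT) : homeo x x' ->
  coef (eqv2 (@homeo phi)) (g x) y = coef (eqv2 (@homeo phi)) (g x') y.
Proof.
move=> [f [pf [sf hf]]]; rewrite !coef_sumE.
have E1 := rho_sum x (fun z => ind_ R (eqv2 (@homeo phi) z y)).
have E2 := rho_sum x' (fun z => ind_ R (eqv2 (@homeo phi) z y)).
cbv beta in E1, E2; rewrite E1 E2 {E1 E2}.
have pf' := pf; case: pf' => mf inj pp.
have fr := emb_root pf sf.
have pe : perm_eq (rt_edges (projT1 x')) (map f (rt_edges (projT1 x))).
  apply: uniq_perm.
  - by apply: filter_uniq; case: (rt_ax (projT1 x')).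
  - rewrite map_inj_in_uniq; first by apply: filter_uniq; case: (rt_ax (projT1 x)).
    by move=> a b; rewrite !inE_x => /andP[_ ain] /andP[_ bin]; apply: inj.
  - move=> w; apply/idP/mapP => [|[t te ->]]; last by case: (cut_homeo sf hf te).
    rewrite inE_x => /andP[wr win]; have [t tin ftw] := sf w win; exists t => //.
    rewrite inE_x tin andbT; apply: contra wr => /eqP tr; by rewrite -ftw tr fr.
rewrite [RHS](perm_big _ pe) big_map; apply: eq_big_seq => v ve.
have [_ [h1 h2]] := cut_homeo sf hf ve.
exact: ind2_homeo.
Qed.

Lemma wd : well_defined_comult (@homeo phi) g.
Proof.
move=> l l' hc y.
have lc : forall l0, coef (eqv2 (@homeo phi)) (lin_ext g l0) y =
    \sum_(p <- l0) p.1 * coef (eqv2 (@homeo phi)) (g p.2) y.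
  move=> l0; rewrite coef_sumE.
  have E1 := lin_sum g l0 (fun z => ind_ R (eqv2 (@homeo phi) z y)).
  by cbv beta in E1; rewrite E1; apply: eq_bigr => p _; rewrite coef_sumE.
rewrite !lc; apply: (sum_class (@homeo_refl phi) (@homeo_sym phi) (@homeo_trans phi) (Ginv y) hc).
Qed.
End Main.

Section PL.
Variables (R : comPzRingType) (phi : rtree_structure).
Local Notation g := (@rho_gen R phi).
Local Notation PT := (phitree phi).
Local Notation hom := (@homeo phi).
Local Notation I3 z w := (ind_ R (eqv3 hom z w)).

Definition fl (w : PT * PT * PT) := (w.1.2, w.1.1, w.2).

Definition Aw (x : PT) (w : PT * PT * PT) : R :=
  \sum_(q <- g x) q.1 * \sum_(q' <- g q.2.1) q'.1 * I3 (q'.2.1, q'.2.2, q.2.2) w.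
Definition Bw (x : PT) (w : PT * PT * PT) : R :=
  \sum_(q <- g x) q.1 * \sum_(q' <- g q.2.2) q'.1 * I3 (q.2.1, q'.2.1, q'.2.2) w.

Lemma coefA l w : coef (eqv3 hom) (ext_l g (lin_ext g l)) w = \sum_(p <- l) p.1 * Aw p.2 w.
Proof.
rewrite coef_sumE.
have E1 := extl_sum g (lin_ext g l) (fun z => I3 z w); cbv beta in E1; rewrite E1.
exact: (lin_sum g l (fun z => \sum_(q <- g z.1) q.1 * I3 (q.2.1, q.2.2, z.2) w)).
Qed.

Lemma coefB l w : coef (eqv3 hom) (ext_r g (lin_ext g l)) w = \sum_(p <- l) p.1 * Bw p.2 w.
Proof.
rewrite coef_sumE.
have E1 := extr_sum g (lin_ext g l) (fun z => I3 z w); cbv beta in E1; rewrite E1.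
exact: (lin_sum g l (fun z => \sum_(q <- g z.2) q.1 * I3 (z.1, q.2.1, q.2.2) w)).
Qed.

Lemma I3_flip z w : I3 z (fl w) = I3 (fl z) w.
Proof.
rewrite /ind_ (@asbool_equiv_eq _ (eqv3 hom (fl z) w)) //.
by split=> -[h1 h2 h3]; split.
Qed.

Section X.
Variable x : PT.
Local Notation T := (projT1 x).
Local Notation vs := (rt_vs T).
Local Notation r := (rt_root T).
Local Notation D := (desc T).

Definition al w u v := if [&& u != r, `[< D u v >] & v != u]
  then I3 (c1 (c1 x u) v, c2 (c1 x u) v, c2 x u) w else 0.
Definition be w a b := if [&& a != r, ~~ `[< D a b >] & b != r]
  then I3 (c1 x a, c1 (c2 x a) b, c2 (c2 x a) b) w else 0.
Definition ga w a b := if [&& a != r, ~~ `[< D a b >], b != r & ~~ `[< D b a >]]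
  then I3 (c1 x a, c1 (c2 x a) b, c2 (c2 x a) b) w else 0.
Definition S (F : nat -> nat -> R) := \sum_(a <- vs) \sum_(b <- vs) F a b.

Lemma A_nat w : Aw x w = S (al w).
Proof.
rewrite /Aw.
have E1 := rho_sum x (fun z => \sum_(q' <- g z.1) q'.1 * I3 (q'.2.1, q'.2.2, z.2) w).
cbv beta in E1; rewrite E1.
rewrite {1}/rt_edges big_filter big_mkcond; apply: eq_big_seq => u uin.
case: ifP => ur /=.
  have ue : u \in rt_edges T by rewrite inE_x ur.
  have E2 := rho_sum (c1 x u) (fun z => I3 (z.1, z.2, c2 x u) w).
  cbv beta in E2; rewrite E2.
  rewrite /rt_edges (c1_vs ue) (c1_root ue) big_filter big_filter_cond big_mkcond.
  by apply: eq_bigr => v _; rewrite /al ur.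
by rewrite big1 // => v _; rewrite /al ur.
Qed.

Lemma B_nat w : Bw x w = S (be w).
Proof.
rewrite /Bw.
have E1 := rho_sum x (fun z => \sum_(q' <- g z.2) q'.1 * I3 (z.1, q'.2.1, q'.2.2) w).
cbv beta in E1; rewrite E1.
rewrite {1}/rt_edges big_filter big_mkcond; apply: eq_big_seq => a ain.
case: ifP => ar /=.
  have ae : a \in rt_edges T by rewrite inE_x ar.
  have E2 := rho_sum (c2 x a) (fun z => I3 (c1 x a, z.1, z.2) w).
  cbv beta in E2; rewrite E2.
  rewrite /rt_edges (c2_vs ae) (c2_root ae) big_filter big_filter_cond big_mkcond.
  by apply: eq_bigr => b _; rewrite /be ar.
by rewrite big1 // => b _; rewrite /be ar.
Qed.

Lemma be_split w a b : a \in vs -> b \in vs -> be w a b = al w b a + ga w a b.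
Proof.
move=> ain bin; rewrite /be /al /ga.
case dba: `[< D b a >] => /=; last by rewrite andbF add0r andbT.
rewrite !andbF /= addr0.
have h : [&& a != r, ~~ `[< D a b >] & b != r] = (b != r) && (a != b).
  move/asboolP: dba => dba.
  apply/and3P/andP => [[ar nab br]|[br ab]].
    split => //; apply: contra nab => /eqP ->; apply/asboolP; exact: desc_refl.
  split => //.
    apply/eqP => ar; move: dba; rewrite ar => /desc_root br'.
    by move: br; rewrite br' eqxx.
  apply/negP => /asboolP dab; move/negP: ab; apply; apply/eqP.
  exact: (desc_antisym ain bin dab dba).
rewrite h; case: ifP => // /andP[br ab].
move/asboolP: dba => dba.
have ba : a != b by [].
symmetry; apply: ind3_homeo.
- by apply: H1.
- by apply: H2.
- by apply: H3.
Qed.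

Lemma ga_swap w a b : a \in vs -> b \in vs -> ga (fl w) b a = ga w a b.
Proof.
move=> ain bin; rewrite /ga.
have -> : [&& b != r, ~~ `[< D b a >], a != r & ~~ `[< D a b >]] =
          [&& a != r, ~~ `[< D a b >], b != r & ~~ `[< D b a >]].
  by case: (a != r); case: (b != r); case: `[< D a b >]; case: `[< D b a >].
case: ifP => // /and4P[ar /asboolPn nab br /asboolPn nba].
rewrite I3_flip /fl /=; apply: ind3_homeo.
- by apply: homeo_sym; apply: H4.
- by apply: H4.
- by apply: H5.
Qed.

Lemma main_pt w : Aw x w - Bw x w = Aw x (fl w) - Bw x (fl w).
Proof.
suff key : forall w, Aw x w - Bw x w = - S (ga w).
  rewrite !key; congr (- _); rewrite /S [RHS]exchange_big.
  apply: eq_big_seq => a ain; apply: eq_big_seq => b bin.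
  by rewrite ga_swap.
move=> w0; rewrite A_nat B_nat.
have -> : S (be w0) = S (al w0) + S (ga w0).
  rewrite /S [X in _ = X + _]exchange_big -big_split; apply: eq_big_seq => a ain.
  rewrite -big_split; apply: eq_big_seq => b bin.
  exact: be_split.
by rewrite opprD addrA subrr add0r.
Qed.
End X.

Lemma pl : preLie_comult (@homeo phi) g.
Proof.
move=> l y; rewrite /preLie_defect coef_fsub coef_flip !coef_fsub !coefA !coefB.
rewrite -!sumrB; apply: big1 => p _.
rewrite -!mulrBr; have := main_pt p.2 y; rewrite /fl => ->; by rewrite subrr mulr0.
Qed.
End PL.
Local Close Scope ring_scope.

Theorem lemma4p2 (R : comPzRingType) (phi : rtree_structure) :
  well_defined_comult (@homeo phi) (@rho_gen R phi) /\
  preLie_comult (@homeo phi) (@rho_gen R phi).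
Proof. split; [exact: wd | exact: pl]. Qed.
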